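(* Assume $T_B\colon\mathcal D(T_B)\to Y_B$ is bijective. Then for each $n\in\mathbb Z$, $X=X(n)\oplus Z(n)$.
   Context: $B$ is an admissible Banach sequence space: a complete normed space $B$ of real sequences $(s_n)_{n\in\mathbb Z}$ such that $\mathbf{s}'\in B$, $|s_n|\le|s'_n|$ for all $n$ imply $\mathbf{s}\in B$, $\|\mathbf{s}\|_B\le\|\mathbf{s}'\|_B$; $\chi_{\{n\}}\in B$ with $\|\chi_{\{n\}}\|_B>0$ for all $n$; and shifts $(s_{n+m})_n$ of elements of $B$ are in $B$ with norm at most $N\|\mathbf{s}\|_B$ for a fixed $N>0$. $X$ is a Banach space with norms $\|\cdot\|_n$ ($n\in\mathbb Z$) each equivalent to its norm; $(A_m)_{m\in\mathbb Z}$ are bounded linear operators on $X$. $Y_B$ is the Banach space of sequences $\mathbf{x}=(x_n)_{n\in\mathbb Z}$ in $X$ with $(\|x_n\|_n)_n\in B$, normed by $\|(\|x_n\|_n)_n\|_B$; $(T_B\mathbf{x})_n=x_n-A_{n-1}x_{n-1}$ on $\mathcal D(T_B)=\{\mathbf{x}\in Y_B:T_B\mathbf{x}\in Y_B\}$. For $n\in\mathbb Z$, $X(n)$ is the set of $x\in X$ for which there is $\mathbf{x}=(x_m)_m\in Y_B$ with $x_n=x$ and $x_m=A_{m-1}x_{m-1}$ for all $m>n$; $Z(n)$ is the set of $x\in X$ for which there is $\mathbf{z}=(z_m)_m\in Y_B$ with $z_n=x$ and $z_m=A_{m-1}z_{m-1}$ for all $m\le n$. *)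

(* Defs.v *)
From Stdlib Require Import Reals Lra ZArith.
Open Scope R_scope.

Record RBanach := mkRBanach {
  car :> Type;
  vzero : car;
  vadd : car -> car -> car;
  vopp : car -> car;
  vscal : R -> car -> car;
  vnorm : car -> R;
  vadd_assoc : forall x y z, vadd x (vadd y z) = vadd (vadd x y) z;
  vadd_comm : forall x y, vadd x y = vadd y x;
  vadd_0 : forall x, vadd x vzero = x;
  vadd_opp : forall x, vadd x (vopp x) = vzero;
  vscal_1 : forall x, vscal 1 x = x;
  vscal_assoc : forall a b x, vscal a (vscal b x) = vscal (a * b) x;
  vscal_distr_v : forall a x y, vscal a (vadd x y) = vadd (vscal a x) (vscal a y);
  vscal_distr_s : forall a b x, vscal (a + b) x = vadd (vscal a x) (vscal b x);
  vnorm_eq0 : forall x, vnorm x = 0 -> x = vzero;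
  vnorm_scal : forall a x, vnorm (vscal a x) = Rabs a * vnorm x;
  vnorm_triangle : forall x y, vnorm (vadd x y) <= vnorm x + vnorm y;
  vcomplete : forall u : nat -> car,
    (forall eps, eps > 0 -> exists K, forall p q, (p >= K)%nat -> (q >= K)%nat ->
        vnorm (vadd (u p) (vopp (u q))) < eps) ->
    exists l, forall eps, eps > 0 -> exists K, forall p, (p >= K)%nat ->
        vnorm (vadd (u p) (vopp l)) < eps
}.

Arguments vzero {r}.

Definition is_norm (X : RBanach) (N : X -> R) : Prop :=
  (forall x, N x = 0 -> x = vzero) /\
  (forall a x, N (vscal X a x) = Rabs a * N x) /\
  (forall x y, N (vadd X x y) <= N x + N y).

Definition equiv_norm (X : RBanach) (N : X -> R) : Prop :=
  exists c d, c > 0 /\ d > 0 /\ forall x, c * vnorm X x <= N x <= d * vnorm X x.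

Definition bounded_linear (X : RBanach) (L : X -> X) : Prop :=
  (forall x y, L (vadd X x y) = vadd X (L x) (L y)) /\
  (forall a x, L (vscal X a x) = vscal X a (L x)) /\
  (exists M, forall x, vnorm X (L x) <= M * vnorm X x).

Definition chi (n : Z) : Z -> R := fun m => if Z.eq_dec m n then 1 else 0.

(* Admissible Banach sequence space: inB is the set B (a set of real
   sequences indexed by Z), normB its norm. *)
Definition admissible (inB : (Z -> R) -> Prop) (normB : (Z -> R) -> R) : Prop :=
  inB (fun _ => 0) /\
  (forall s t, inB s -> inB t -> inB (fun n => s n + t n)) /\
  (forall a s, inB s -> inB (fun n => a * s n)) /\
  (forall s, inB s -> normB s = 0 -> forall n, s n = 0) /\
  (forall a s, inB s -> normB (fun n => a * s n) = Rabs a * normB s) /\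
  (forall s t, inB s -> inB t -> normB (fun n => s n + t n) <= normB s + normB t) /\
  (forall u : nat -> Z -> R, (forall k, inB (u k)) ->
    (forall eps, eps > 0 -> exists K, forall p q, (p >= K)%nat -> (q >= K)%nat ->
        normB (fun n => u p n - u q n) < eps) ->
    exists l, inB l /\ forall eps, eps > 0 -> exists K, forall p, (p >= K)%nat ->
        normB (fun n => u p n - l n) < eps) /\
  (forall s s', inB s' -> (forall n, Rabs (s n) <= Rabs (s' n)) ->
     inB s /\ normB s <= normB s') /\
  (forall n, inB (chi n) /\ normB (chi n) > 0) /\
  (exists N, N > 0 /\ forall s m, inB s ->
     inB (fun n => s (n + m)%Z) /\ normB (fun n => s (n + m)%Z) <= N * normB s).

Definition inY (X : RBanach) (nrm : Z -> X -> R) (inB : (Z -> R) -> Prop)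
  (x : Z -> X) : Prop := inB (fun n => nrm n (x n)).

Definition TB (X : RBanach) (A : Z -> X -> X) (x : Z -> X) : Z -> X :=
  fun n => vadd X (x n) (vopp X (A (n - 1)%Z (x (n - 1)%Z))).

Definition domTB (X : RBanach) (nrm : Z -> X -> R) (inB : (Z -> R) -> Prop)
  (A : Z -> X -> X) (x : Z -> X) : Prop :=
  inY X nrm inB x /\ inY X nrm inB (TB X A x).

Definition TB_bijective (X : RBanach) (nrm : Z -> X -> R) (inB : (Z -> R) -> Prop)
  (A : Z -> X -> X) : Prop :=
  (forall x1 x2, domTB X nrm inB A x1 -> domTB X nrm inB A x2 ->
     TB X A x1 = TB X A x2 -> x1 = x2) /\
  (forall y, inY X nrm inB y -> exists x, domTB X nrm inB A x /\ TB X A x = y).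

Definition Xsub (X : RBanach) (nrm : Z -> X -> R) (inB : (Z -> R) -> Prop)
  (A : Z -> X -> X) (n : Z) (x : X) : Prop :=
  exists xs : Z -> X, inY X nrm inB xs /\ xs n = x /\
    forall m, (m > n)%Z -> xs m = A (m - 1)%Z (xs (m - 1)%Z).

Definition Zsub (X : RBanach) (nrm : Z -> X -> R) (inB : (Z -> R) -> Prop)
  (A : Z -> X -> X) (n : Z) (x : X) : Prop :=
  exists zs : Z -> X, inY X nrm inB zs /\ zs n = x /\
    forall m, (m <= n)%Z -> zs m = A (m - 1)%Z (zs (m - 1)%Z).

Definition direct_sum (X : RBanach) (U V : X -> Prop) : Prop :=
  (forall x : X, exists u v, U u /\ V v /\ x = vadd X u v) /\
  (forall x : X, U x -> V x -> x = vzero).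

(* Main.v *)
Require Import Defs.
From Stdlib Require Import Reals ZArith Lra Lia FunctionalExtensionality.
Open Scope R_scope.

Lemma add_cancel_l (X : RBanach) (a b c : X) : vadd X a b = vadd X a c -> b = c.
Proof.
  intro H.
  assert (H0 : vadd X (vopp X a) (vadd X a b) = vadd X (vopp X a) (vadd X a c)) by now rewrite H.
  rewrite !vadd_assoc in H0.
  rewrite (vadd_comm X (vopp X a) a), vadd_opp in H0.
  rewrite !(vadd_comm X (@vzero X)), !vadd_0 in H0. exact H0.
Qed.

Lemma sub_eq (X : RBanach) (a b c : X) : vadd X a (vopp X b) = c -> a = vadd X c b.
Proof.
  intro H; subst c. rewrite <- vadd_assoc, (vadd_comm X (vopp X b) b), vadd_opp, vadd_0.
  reflexivity.
Qed.

Lemma scal0 (X : RBanach) (x : X) : vscal X 0 x = vzero.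
Proof.
  assert (H: vscal X 0 x = vadd X (vscal X 0 x) (vscal X 0 x)).
  { rewrite <- vscal_distr_s. f_equal. ring. }
  apply eq_sym, (add_cancel_l X (vscal X 0 x)). rewrite vadd_0. exact H.
Qed.

Lemma opp_scal (X : RBanach) (x : X) : vopp X x = vscal X (-1) x.
Proof.
  apply (add_cancel_l X x). rewrite vadd_opp.
  assert (H : vadd X (vscal X 1 x) (vscal X (-1) x) = vzero).
  { rewrite <- vscal_distr_s. replace (1 + -1) with 0 by ring. apply scal0. }
  rewrite vscal_1 in H. rewrite H. reflexivity.
Qed.

Lemma opp0 (X : RBanach) : vopp X vzero = vzero.
Proof. rewrite opp_scal. apply (eq_trans (y := vscal X (-1) (vscal X 0 vzero))).
  - rewrite scal0. reflexivity.
  - rewrite vscal_assoc. replace (-1 * 0) with 0 by ring. apply scal0. Qed.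

Lemma norm0 (X : RBanach) N : is_norm X N -> N vzero = 0.
Proof.
  intros [_ [Hs _]]. rewrite <- (scal0 X vzero), Hs, Rabs_R0; ring.
Qed.

Lemma norm_opp (X : RBanach) N x : is_norm X N -> N (vopp X x) = N x.
Proof.
  intros H. pose proof H as [_ [Hs _]].
  rewrite opp_scal, Hs. replace (Rabs (-1)) with 1 by (rewrite Rabs_left by lra; ring). ring.
Qed.

Lemma norm_nonneg (X : RBanach) N x : is_norm X N -> 0 <= N x.
Proof.
  intros H. pose proof H as [_ [_ Ht]].
  pose proof (Ht x (vopp X x)) as T. rewrite vadd_opp, norm0, norm_opp in T by exact H.
  lra.
Qed.

Lemma lin0 (X : RBanach) L : bounded_linear X L -> L vzero = vzero.
Proof.
  intros [Ha _]. apply (add_cancel_l X (L vzero)). rewrite <- Ha, !vadd_0. reflexivity.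
Qed.

Lemma lin_opp (X : RBanach) L v : bounded_linear X L -> L (vopp X v) = vopp X (L v).
Proof.
  intros H. pose proof H as [Ha _]. apply (add_cancel_l X (L v)).
  rewrite <- Ha, !vadd_opp. apply lin0; exact H.
Qed.

Theorem lemma3p5 (X : RBanach) (nrm : Z -> X -> R)
  (inB : (Z -> R) -> Prop) (normB : (Z -> R) -> R) (A : Z -> X -> X)
  (HB : admissible inB normB)
  (Hnrm : forall n, is_norm X (nrm n) /\ equiv_norm X (nrm n))
  (HA : forall m, bounded_linear X (A m))
  (HT : TB_bijective X nrm inB A) :
  forall n : Z, direct_sum X (Xsub X nrm inB A n) (Zsub X nrm inB A n).
Proof.
  destruct HB as [H0 [Hadd [Hscal [_ [_ [_ [_ [Hsol [Hchi _]]]]]]]]].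
  assert (Hn : forall m, is_norm X (nrm m)) by (intro m; apply Hnrm).
  destruct HT as [Hinj Hsurj].
  intro n. split.
  - intro x.
    set (y := fun m => if Z.eq_dec m (n+1) then A n x else vzero).
    assert (Hy : inY X nrm inB y).
    { unfold inY.
      apply (Hsol _ (fun m => nrm (n+1)%Z (A n x) * chi (n+1) m)).
      + apply Hscal, Hchi.
      + intro m. unfold y, chi. destruct (Z.eq_dec m (n+1)).
        * subst m. rewrite Rmult_1_r. apply Rle_refl.
        * rewrite norm0 by apply Hn. rewrite Rmult_0_r. apply Rle_refl. }
    destruct (Hsurj y Hy) as [u [[Hu1 Hu2] Hu]].
    assert (Hm : forall m, vadd X (u m) (vopp X (A (m-1)%Z (u (m-1)%Z))) = y m).
    { intro m. exact (f_equal (fun f => f m) Hu). }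
    assert (Hz : forall m, m <> (n+1)%Z -> u m = A (m-1)%Z (u (m-1)%Z)).
    { intros m Hne. pose proof (Hm m) as E. unfold y in E.
      destruct (Z.eq_dec m (n+1)); [contradiction|].
      apply sub_eq in E. rewrite E, vadd_comm, vadd_0. reflexivity. }
    exists (vadd X (u n) x).
    exists (vopp X (u n)).
    split; [|split].
    + exists (fun m => if Z.eq_dec m n then vadd X (u n) x else u m).
      split; [|split; [destruct (Z.eq_dec n n); [reflexivity|contradiction]|]].
      * unfold inY.
        apply (Hsol _ (fun m => nrm m (u m) + nrm n x * chi n m)).
        -- apply Hadd; [exact Hu1|]. apply Hscal, Hchi.
        -- intro m. unfold chi. destruct (Z.eq_dec m n).
           ++ subst m. rewrite Rmult_1_r.
              pose proof (norm_nonneg X _ (vadd X (u n) x) (Hn n)).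
              pose proof (norm_nonneg X _ (u n) (Hn n)).
              pose proof (norm_nonneg X _ x (Hn n)).
              pose proof (proj2 (proj2 (Hn n)) (u n) x).
              rewrite !Rabs_right by lra. exact H3.
           ++ rewrite Rmult_0_r, Rplus_0_r. apply Rle_refl.
      * intros m Hmn. destruct (Z.eq_dec m n); [lia|].
        destruct (Z.eq_dec (m-1) n) as [e|e].
        -- pose proof (Hm m) as E. unfold y in E.
           destruct (Z.eq_dec m (n+1)); [|lia].
           apply sub_eq in E. rewrite E. rewrite e.
           pose proof (proj1 (HA n)) as Ha. rewrite Ha, vadd_comm. reflexivity.
        -- apply Hz. lia.
    + exists (fun m => vopp X (u m)). split; [|split; [reflexivity|]].
      * unfold inY. apply (Hsol _ (fun m => nrm m (u m))); [exact Hu1|].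
        intro m. rewrite norm_opp by apply Hn. apply Rle_refl.
      * intros m Hmn. rewrite (Hz m) by lia. rewrite lin_opp by apply HA. reflexivity.
    + rewrite (vadd_comm X (u n) x), <- vadd_assoc, vadd_opp, vadd_0. reflexivity.
  - intros x [xs [Hx1 [Hx2 Hx3]]] [zs [Hz1 [Hz2 Hz3]]].
    set (w := fun m => if Z_lt_le_dec m n then zs m else xs m).
    assert (Hrec : forall m, w m = A (m-1)%Z (w (m-1)%Z)).
    { intro m. unfold w.
      destruct (Z_lt_le_dec m n); destruct (Z_lt_le_dec (m-1) n); try lia.
      - apply Hz3; lia.
      - assert (m = n) by lia. subst m. rewrite Hx2, <- Hz2. apply Hz3; lia.
      - apply Hx3. lia. }
    assert (HwT : TB X A w = fun _ => vzero).
    { apply functional_extensionality. intro m. unfold TB. rewrite <- Hrec. apply vadd_opp. }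
    assert (H0T : TB X A (fun _ => vzero) = fun _ => vzero).
    { apply functional_extensionality. intro m. unfold TB.
      rewrite lin0 by apply HA. rewrite opp0, vadd_0. reflexivity. }
    assert (HY0 : inY X nrm inB (fun _ => vzero)).
    { unfold inY. apply (Hsol _ (fun _ => 0)); [exact H0|].
      intro m. rewrite norm0 by apply Hn. apply Rle_refl. }
    assert (Hw0 : w = fun _ => vzero).
    { apply Hinj.
      - split.
        + unfold inY. apply (Hsol _ (fun m => nrm m (xs m) + nrm m (zs m))).
          * apply Hadd; assumption.
          * intro m. pose proof (norm_nonneg X _ (xs m) (Hn m)).
            pose proof (norm_nonneg X _ (zs m) (Hn m)).
            unfold w. destruct (Z_lt_le_dec m n);
            [pose proof (norm_nonneg X _ (zs m) (Hn m))|pose proof (norm_nonneg X _ (xs m) (Hn m))];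
            rewrite !Rabs_right by lra; lra.
        + rewrite HwT. exact HY0.
      - split; [exact HY0|]. rewrite H0T. exact HY0.
      - rewrite HwT, H0T. reflexivity. }
    pose proof (f_equal (fun f => f n) Hw0) as E. simpl in E. unfold w in E.
    destruct (Z_lt_le_dec n n); [lia|]. rewrite <- Hx2. exact E.
Qed.
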